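(* Let $S$ be a numerical semigroup. If $d \in S \setminus \{0\}$, then there is an $A \in \mathsf{M}_d(\mathbb{Q})$ such that $\mathcal{S}(A) = S$. In particular, $\dim_{\mathrm{mat}} S \leq m(S) = \min (S \setminus \{0\})$.
   Context: $\mathbb{N} = \{0,1,2,\ldots\}$. A semigroup means an additive subsemigroup of $\mathbb{N}$ containing $0$; a numerical semigroup is a semigroup with finite complement in $\mathbb{N}$. Its multiplicity $m(S)$ is the smallest nonzero element of $S$. $\mathsf{M}_d(X)$ denotes the $d\times d$ matrices with entries in $X$. For $A \in \mathsf{M}_d(\mathbb{Q})$, $\mathcal{S}(A) = \{ n \in \mathbb{N} : A^n \in \mathsf{M}_d(\mathbb{Z})\}$. The matricial dimension $\dim_{\mathrm{mat}} S$ of a semigroup $S$ is the smallest $d$ such that $S = \mathcal{S}(A)$ for some $A \in \mathsf{M}_d(\mathbb{Q})$. *)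

(* Defs.v *)
From mathcomp Require Import all_boot all_order all_algebra.
Set Implicit Arguments. Unset Strict Implicit. Unset Printing Implicit Defensive.
Import Order.TTheory GRing.Theory Num.Theory.
Local Open Scope ring_scope.

Definition is_semigroup (S : nat -> Prop) : Prop :=
  S 0%N /\ (forall a b : nat, S a -> S b -> S (a + b)%N).

Definition is_numerical_semigroup (S : nat -> Prop) : Prop :=
  is_semigroup S /\ exists N : nat, forall n : nat, (N <= n)%N -> S n.

Definition is_multiplicity (S : nat -> Prop) (m : nat) : Prop :=
  S m /\ (0 < m)%N /\ (forall n : nat, S n -> (0 < n)%N -> (m <= n)%N).

Definition mxpow (d : nat) (A : 'M[rat]_d) (n : nat) : 'M[rat]_d :=
  iter n (mulmx A) 1%:M.

Definition is_int_mx (d : nat) (A : 'M[rat]_d) : Prop :=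
  forall i j : 'I_d, A i j \is a Num.int.

Definition SA (d : nat) (A : 'M[rat]_d) : nat -> Prop :=
  fun n => is_int_mx (mxpow A n).

Definition realizable_in_dim (S : nat -> Prop) (d : nat) : Prop :=
  exists A : 'M[rat]_d, forall n : nat, S n <-> SA A n.

Definition is_dim_mat (S : nat -> Prop) (k : nat) : Prop :=
  realizable_in_dim S k /\ (forall d : nat, realizable_in_dim S d -> (k <= d)%N).

(* Main.v *)
Require Import Defs.
From mathcomp Require Import all_boot all_order all_algebra.
From mathcomp Require Import zify.
From Stdlib Require Import ClassicalEpsilon.
Import Order.TTheory GRing.Theory Num.Theory.

Definition Sb (S : nat -> Prop) (n : nat) : bool :=
  if excluded_middle_informative (S n) then true else false.

Lemma SbP S n : reflect (S n) (Sb S n).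
Proof. rewrite /Sb; case: excluded_middle_informative => H; by constructor. Qed.

Definition wap (S : nat -> Prop) (d r : nat) : nat :=
  match excluded_middle_informative
          (exists s, Sb S s && (s %% d == r %% d)) with
  | left H => ex_minn H
  | right _ => 0
  end.

Lemma S_addmul S d n k : is_semigroup S -> S d -> S n -> S (n + k * d).
Proof.
move=> [S0 Sadd] Sd Sn; elim: k => [|k IH]; first by rewrite addn0.
by rewrite mulSn addnCA; apply: Sadd.
Qed.

Lemma wap_spec S d r : is_numerical_semigroup S -> (0 < d)%N ->
  [/\ S (wap S d r), wap S d r %% d = r %% d &
      forall s, S s -> s %% d = r %% d -> (wap S d r <= s)%N].
Proof.
move=> [Ssg [N HN]] d0.
have ex : exists s, Sb S s && (s %% d == r %% d).
  exists (N * d + r); apply/andP; split.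
    apply/SbP; apply: HN; nia.
  by rewrite modnMDl.
rewrite /wap; case: excluded_middle_informative => [H|//].
case: ex_minnP => m /andP [/SbP Sm /eqP mr] mmin; split => // s Ss sr.
by apply: mmin; rewrite sr eqxx andbT; apply/SbP.
Qed.


Definition G (S : nat -> Prop) (d m : nat) : int :=
  ((m %/ d)%:Z - (wap S d (m %% d) %/ d)%:Z)%R.

Lemma G0 S d : is_numerical_semigroup S -> (0 < d)%N -> G S d 0 = 0%R.
Proof.
move=> ns d0; have [_ _ H] := wap_spec S d 0 ns d0.
have := H 0%N ns.1.1 erefl; rewrite leqn0 => /eqP e.
by rewrite /G mod0n e div0n.
Qed.

Lemma Gshift S d x q : (0 < d)%N -> G S d (x + q * d) = (G S d x + q%:Z)%R.
Proof.
move=> d0; rewrite /G addnC modnMDl divnMDl // PoszD; lia.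
Qed.

Lemma Gge0 S d m : is_numerical_semigroup S -> (0 < d)%N -> S d ->
  (0 <= G S d m)%R <-> S m.
Proof.
move=> ns d0 Sd; have [Sw wm wmin] := wap_spec S d (m %% d) ns d0.
rewrite modn_mod in wm.
set w := wap S d (m %% d) in Sw wm wmin *.
rewrite /G subr_ge0 lez_nat -/w; split.
- move=> le.
  have -> : m = w + (m %/ d - w %/ d) * d.
    rewrite mulnBl.
    have e1 := divn_eq m d; have e2 := divn_eq w d.
    have : (w %/ d * d <= m %/ d * d)%N by rewrite leq_mul2r le orbT.
    lia.
  exact: (S_addmul _ _ _ _ ns.1 Sd Sw).
- by move=> Sm; apply: leq_div2r; apply: wmin => //; rewrite modn_mod.
Qed.

Lemma Gmono S d i n : is_numerical_semigroup S -> (0 < d)%N -> S d ->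
  S n -> (i < d)%N -> (G S d i <= G S d (i + n))%R.
Proof.
move=> ns d0 Sd Sn id.
have [Swi wi _] := wap_spec S d i ns d0.
have [_ _ wmin] := wap_spec S d ((i + n) %% d) ns d0.
rewrite /G (divn_small id) (modn_small id).
set wi' := wap S d i in Swi wi *.
set wr := wap S d ((i + n) %% d) in wmin *.
have Ss : S (wi' + n) by apply: ns.1.2.
have sm : (wi' + n) %% d = ((i + n) %% d) %% d.
  by rewrite modn_mod -modnDml wi (modn_small id).
have le := leq_div2r d (wmin _ Ss sm).
have e : (wi' + n) %/ d = ((i + n) %/ d + wi' %/ d)%N.
  rewrite {1}(divn_eq wi' d) wi (modn_small id) -addnA divnMDl // addnC.
  done.
rewrite e in le.
have : (wr %/ d <= (i + n) %/ d + wi' %/ d)%N := le.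
lia.
Qed.

Local Open Scope ring_scope.

Definition Amx S d : 'M[rat]_d :=
  \matrix_(i, j) (if (i : nat) == ((j + 1) %% d)%N
                  then (2%:Q) ^ (G S d (j + 1) - G S d j) else 0).

Lemma Gstep S d m : (0 < d)%N ->
  G S d (m %% d + 1) - G S d (m %% d) = G S d (m + 1) - G S d m.
Proof.
move=> d0; have e := divn_eq m d.
move: (m %/ d)%N (m %% d)%N e => q r ->.
have -> : (q * d + r + 1 = (r + 1) + q * d)%N by lia.
rewrite (addnC (q * d)%N) !Gshift //; lia.
Qed.

Lemma mxpowE S d (A := Amx S d) n (i j : 'I_d) : (0 < d)%N ->
  mxpow A n i j = if (i : nat) == ((j + n) %% d)%N
                  then (2%:Q) ^ (G S d (j + n) - G S d j) else 0.
Proof.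
move=> d0; elim: n i => [|n IH] i.
  rewrite /mxpow /= mxE addn0 modn_small // subrr expr0z.
  by rewrite val_eqE; case: eqP.
have k0lt : ((j + n) %% d < d)%N by rewrite ltn_mod.
pose k0 := Ordinal k0lt.
rewrite /mxpow /= -/(mxpow A n) mxE (bigD1 k0) //= big1; last first.
  move=> k /negbTE kk; rewrite IH.
  have -> : ((k : nat) == ((j + n) %% d)%N) = false.
    by apply/negbTE; apply: contraFN kk => /eqP e; apply/eqP/val_inj.
  by rewrite mulr0.
rewrite IH eqxx addr0 mxE /= modnDml.
have -> : (j + n.+1 = j + n + 1)%N by lia.
case: eqP => _; last by rewrite mul0r.
rewrite -expfzDr // Gstep //; congr (_ ^ _); lia.
Qed.

Lemma pow2_int (z : int) : ((2%:Q) ^ z \is a Num.int) = (0 <= z).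
Proof.
case: z => k.
  by rewrite le0z_nat /= rpredX // natr_int.
have -> : (0 <= Negz k) = false by [].
rewrite -[2%:~R ^ Negz k]/(((2%:Q) ^+ k.+1)^-1); apply/negbTE/negP => Hi.
have ge0 : 0 <= ((2%:Q) ^+ k.+1)^-1 by rewrite invr_ge0 exprn_ge0.
move: Hi; rewrite intrEge0 // => /natrP [m ym].
have : ((m * 2 ^ k.+1)%N%:R = 1 :> rat).
  by rewrite natrM natrX -ym mulVf // expf_neq0.
move/eqP; rewrite pnatr_eq1 expnS => /eqP; lia.
Qed.

Theorem theorem2p2 (S : nat -> Prop) :
  is_numerical_semigroup S ->
  (forall d : nat, S d -> d <> 0%N ->
     exists A : 'M[rat]_d, forall n : nat, S n <-> SA A n)
  /\
  (forall m k : nat, is_multiplicity S m -> is_dim_mat S k -> (k <= m)%N).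
Proof.
move=> ns.
have P1 : forall d : nat, S d -> d <> 0%N ->
     exists A : 'M[rat]_d, forall n : nat, S n <-> SA A n.
  move=> d Sd dn0; have d0 : (0 < d)%N by case: d Sd dn0.
  exists (Amx S d) => n; split.
  - move=> Sn i j; rewrite mxpowE //; case: ifP => _; last exact: rpred0.
    by rewrite pow2_int subr_ge0; apply: Gmono.
  - move=> H.
    have lt : ((0 + n) %% d < d)%N by rewrite ltn_mod.
    have := H (Ordinal lt) (Ordinal d0).
    rewrite mxpowE //= eqxx pow2_int subr_ge0 G0 //.
    by move/(Gge0 _ _ _ ns d0 Sd).
split => // m k [Sm [m0 _]] [_ kmin]; apply: kmin.
apply: P1 => //; lia.
Qed.
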